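(* Let $R=[0,1]^2$, $s\in\mathbb{N}$ and $u=2^{-s}$. If $u\le2^{-5/2}$, then the $4$-dimensional volume of the union $\mathcal{B}_{non\text{-}diag}$ of all non-diagonal box pairs satisfies $\mathrm{vol}(\mathcal{B}_{non\text{-}diag})\le\sqrt2\,u^{1/5}$.
   Context: For $p,q\in\mathbb{R}^2$ write $p\le q$ if both coordinates satisfy $\le$. $R$ is split into $2^s\times2^s$ congruent closed squares (''boxes'') of side length $u$. A box pair is an ordered pair $(B_1,B_2)$ of boxes, viewed as $B_1\times B_2\subset\mathbb{R}^4$, with centers $c_1,c_2$. Let $\mathcal{L}$ be the set of non-vertical lines in $\mathbb{R}^2$ with positive slope; for $\ell\in\mathcal{L}$ with unit direction vector $a=(a_1,a_2)$ (positive coordinates) set $\hat{\ell}:=\min\{a_1,a_2\}$. A line $\ell\in\mathcal{L}$ traverses $(B_1,B_2)$ if it meets both $B_1$ and $B_2$. A box pair is non-diagonal if $c_1\le c_2$, $\|c_1-c_2\|_2\ge\sqrt u$, and every $\ell\in\mathcal{L}$ traversing $(B_1,B_2)$ satisfies $\hat{\ell}<u^{1/5}$. $\mathrm{vol}$ denotes $4$-dimensional Lebesgue measure. *)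

(* Defs.v *)
From HB Require Import structures.
From mathcomp Require Import all_boot all_order all_algebra.
From mathcomp Require Import all_classical all_reals all_analysis.
Unset Printing Implicit Defensive.
Import Order.TTheory GRing.Theory Num.Theory.
Import numFieldNormedType.Exports.
Local Open Scope classical_set_scope.
Local Open Scope ring_scope.

Definition le2 {R : realType} (p q : R * R) : Prop := p.1 <= q.1 /\ p.2 <= q.2.

Definition dist2 {R : realType} (p q : R * R) : R :=
  Num.sqrt ((p.1 - q.1) ^+ 2 + (p.2 - q.2) ^+ 2).

Definition side {R : realType} (s : nat) : R := (2 ^+ s)^-1.

Definition box {R : realType} (s : nat) (ij : 'I_(2 ^ s) * 'I_(2 ^ s)) : set (R * R) :=
  [set p : R * R | (ij.1)%:R * side s <= p.1 <= ((ij.1).+1)%:R * side s /\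
           (ij.2)%:R * side s <= p.2 <= ((ij.2).+1)%:R * side s].

Definition center {R : realType} (s : nat) (ij : 'I_(2 ^ s) * 'I_(2 ^ s)) : R * R :=
  (((ij.1)%:R + 2^-1) * side s, ((ij.2)%:R + 2^-1) * side s).

(* A line in L (non-vertical, positive slope) is {p + t a | t in R} where
   a = (a1, a2) is its unit direction vector with positive coordinates;
   hat(l) = min(a1, a2). *)
Definition unit_pos_dir {R : realType} (a : R * R) : Prop :=
  0 < a.1 /\ 0 < a.2 /\ a.1 ^+ 2 + a.2 ^+ 2 = 1.

Definition line {R : realType} (p a : R * R) : set (R * R) :=
  [set q | exists t : R, q = (p.1 + t * a.1, p.2 + t * a.2)].

Definition lhat {R : realType} (a : R * R) : R := Num.min a.1 a.2.

Definition traverses {R : realType} (l B1 B2 : set (R * R)) : Prop :=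
  (l `&` B1 !=set0) /\ (l `&` B2 !=set0).

Definition non_diagonal {R : realType} (s : nat)
    (b1 b2 : 'I_(2 ^ s) * 'I_(2 ^ s)) : Prop :=
  le2 (center (R := R) s b1) (center s b2) /\
  Num.sqrt (side (R := R) s) <= dist2 (center (R := R) s b1) (center s b2) /\
  (forall p a : R * R, unit_pos_dir a ->
     traverses (line p a) (box s b1) (box s b2) ->
     lhat a < (side s : R) `^ (5%:R^-1)).

Definition B_nondiag {R : realType} (s : nat) : set ((R * R) * (R * R)) :=
  \bigcup_(b in [set b : ('I_(2 ^ s) * 'I_(2 ^ s)) * ('I_(2 ^ s) * 'I_(2 ^ s))
                 | non_diagonal (R := R) s b.1 b.2])
     (box s b.1 `*` box s b.2).

Definition vol4 {R : realType} : set ((R * R) * (R * R)) -> \bar R :=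
  ((@lebesgue_measure R \x @lebesgue_measure R) \x
   (@lebesgue_measure R \x @lebesgue_measure R))%E.

(* Main.v *)
Require Import Defs.
From HB Require Import structures.
From mathcomp Require Import all_boot all_order all_algebra.
From mathcomp Require Import all_classical all_reals all_analysis.
From mathcomp Require Import zify ring lra.
Import Order.TTheory GRing.Theory Num.Theory.
Local Open Scope classical_set_scope.
Local Open Scope ring_scope.

Section natpart.
Local Open Scope nat_scope.
Lemma sumA N : 2 * (\sum_(j < N) (j.+2)) = N * (N + 3).
Proof.
elim: N => [|N IH]; first by rewrite big_ord0.
rewrite big_ord_recr /= mulnDr IH; lia.
Qed.

Lemma sumB N : 2 * (\sum_(j < N) (N - j).+1) = N * (N + 3).
Proof.
rewrite -sumA (reindex_inj rev_ord_inj) /=; congr (2 * _); apply: eq_bigr => i _.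
have := ltn_ord i; lia.
Qed.

Definition Snat N := \sum_(j1 < N) \sum_(j2 < N) (if j1 <= j2 then (j2 - j1).+1 else 0).

Lemma SnatE N : 6 * Snat N = N * (N + 1) * (N + 2).
Proof.
elim: N => [|N IH]; first by rewrite /Snat big_ord0.
have -> : Snat N.+1 = Snat N + \sum_(j < N) (N - j).+1 + 1.
  rewrite /Snat big_ord_recr /=.
  rewrite (eq_bigr (fun j1 : 'I_N => \sum_(j2 < N) (if j1 <= j2 then (j2 - j1).+1 else 0) + (N - j1).+1)); last first.
    move=> j _; rewrite big_ord_recr /= leq_eqVlt (ltn_ord j) orbT //.
  rewrite big_split /=.
  rewrite [X in _ + X = _]big_ord_recr /= leqnn subnn.
  rewrite [X in _ + (X + 1) = _]big1 ?add0n //.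
  by move=> j _; rewrite leqNgt (ltn_ord j).
have := sumB N; lia.
Qed.
End natpart.

Section psf.
Local Open Scope ereal_scope.
Context d1 d2 (T1 : measurableType d1) (T2 : measurableType d2) (R : realType).
Variable m1 : {sigma_finite_measure set T1 -> \bar R}.
Variable m2 : {sigma_finite_measure set T2 -> \bar R}.

Lemma my_psf : sigma_finite setT (m1 \x m2).
Proof.
have /sigma_finiteP[F [TF ndF Foo]] := sigma_finiteT m1.
have /sigma_finiteP[G [TG ndG Goo]] := sigma_finiteT m2.
exists (fun n => F n `*` G n).
 rewrite -setXTT TF TG predeqE => -[x y]; split.
    move=> [/= [n _ Fnx] [k _ Gky]]; exists (maxn n k) => //; split.
    - by move: x Fnx; exact/subsetPset/ndF/leq_maxl.
    - by move: y Gky; exact/subsetPset/ndG/leq_maxr.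
  by move=> [n _ []/= ? ?]; split; exists n.
move=> k; have [? ?] := Foo k; have [? ?] := Goo k.
split; first exact: measurableX.
by rewrite product_measure1E// lte_mul_pinfty// ge0_fin_numE.
Qed.
End psf.

Definition lebx (R : realType) := ((@lebesgue_measure R) \x (@lebesgue_measure R))%E.
HB.instance Definition _ (R : realType) := Measure.on (lebx R).
HB.instance Definition _ (R : realType) := Measure_isSigmaFinite.Build _ _ _
  (lebx R) (@my_psf _ _ _ _ R (@lebesgue_measure R) (@lebesgue_measure R)).

Section S.
Variable R : realType.

Lemma boxE s ij : box (R:=R) s ij =
  `[(ij.1)%:R * side s, ((ij.1).+1)%:R * side s]%classic `*`
  `[(ij.2)%:R * side s, ((ij.2).+1)%:R * side s]%classic.
Proof.
by apply/seteqP; split => p /=; rewrite !in_itv /=.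
Qed.

Lemma side_gt0 s : 0 < side (R:=R) s.
Proof. by rewrite /side invr_gt0 exprn_gt0. Qed.

Lemma box_meas s ij : measurable (box (R:=R) s ij).
Proof. rewrite boxE; apply: measurableX; exact: measurable_itv. Qed.

Lemma leb_itv (a b : R) : a <= b -> lebesgue_measure (`[a, b]%classic : set R) = (b - a)%:E.
Proof.
move=> ab; rewrite lebesgue_measure_itv /=; rewrite lte_fin.
case: ltP => // ba; have -> : b = a by apply/eqP; rewrite eq_le ab ba.
by rewrite subrr.
Qed.

Lemma leb_box s ij : ((@lebesgue_measure R \x @lebesgue_measure R) (box s ij) = (side s ^+ 2)%:E)%E.
Proof.
have h (k : nat) : k%:R * side (R:=R) s <= k.+1%:R * side s.
  by rewrite ler_pM2r ?side_gt0 // ler_nat.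
have h2 (k : nat) : k.+1%:R * side (R:=R) s - k%:R * side s = side s.
  by rewrite -mulrBl -natrB // subSnn mul1r.
rewrite boxE product_measure1E; try exact: measurable_itv.
rewrite /=; set a := (X in (X * _)%E); set b := (X in (_ * X)%E).
have -> : a = (side s)%:E by rewrite /a leb_itv // h2.
have -> : b = (side s)%:E by rewrite /b leb_itv // h2.
by rewrite -EFinM expr2.
Qed.

Lemma vol_box s b1 b2 : vol4 (box (R:=R) s b1 `*` box s b2) = (side s ^+ 4)%:E.
Proof.
rewrite /vol4; have E := (product_measure1E (lebx R) (lebx R) (box_meas s b1) (box_meas s b2))%E. apply: (eq_trans E).
set a := (X in (X * _)%E); set b := (X in (_ * X)%E).
have -> : a = (side s ^+ 2)%:E by exact: leb_box.
have -> : b = (side s ^+ 2)%:E by exact: leb_box.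
by rewrite -EFinM -exprD.
Qed.

Lemma count_line N (i1 : nat) (X : R) : 0 <= X ->
  \sum_(i2 < N) (if (i1 <= i2)%N && ((i2 - i1).+1%:R < X) then 1 else 0) <= X.
Proof.
move=> X0.
rewrite -big_mkcond /= sumr_const.
set P := (X in #|X|).
have hk : (#|P| <= Num.truncn X)%N.
  rewrite cardE -(size_map val).
  have -> : Num.truncn X = size (iota i1 (Num.truncn X)) by rewrite size_iota.
  apply: uniq_leq_size; first by rewrite map_inj_uniq ?enum_uniq //; exact: val_inj.
  move=> x /mapP [i]; rewrite mem_enum /P /= => /andP [h1 h2] ->.
  rewrite mem_iota h1 /=.
  have : ((i - i1)%N < Num.truncn X)%N by rewrite Num.Theory.truncn_gt_nat ltW.
  lia.
apply: le_trans (_ : (Num.truncn X)%:R <= X); last by rewrite Num.Theory.truncn_le.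
by rewrite -[1 *+ _]/(_%:R) ler_nat.
Qed.

Lemma sum_pair (I J : finType) (F : I * J -> R) :
  \sum_(p : I * J) F p = \sum_(i : I) \sum_(j : J) F (i, j).
Proof. by rewrite pair_bigA; apply: eq_bigr => -[]. Qed.

Definition dn (a b : nat) : nat := (b - a).+1.

Definition Q1 {N : nat} (c : R) (b : ('I_N * 'I_N) * ('I_N * 'I_N)) : bool :=
  [&& (b.1.1 <= b.2.1)%N, (b.1.2 <= b.2.2)%N &
      ((dn b.1.1 b.2.1)%:R < c * (dn b.1.2 b.2.2)%:R)].

Lemma count1 N c : 0 <= c ->
  \sum_(b : ('I_N * 'I_N) * ('I_N * 'I_N)) (if Q1 c b then 1 else 0)
    <= c * N%:R * (Snat N)%:R.
Proof.
move=> c0.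
rewrite sum_pair sum_pair.
apply: (@le_trans _ _ (\sum_(i1 < N) \sum_(j1 < N) \sum_(j2 < N)
   (if (j1 <= j2)%N then c * (dn j1 j2)%:R else 0))).
  apply: ler_sum => i1 _; apply: ler_sum => j1 _.
  rewrite sum_pair exchange_big /=; apply: ler_sum => j2 _.
  case: leqP => hj.
    apply: le_trans (count_line N i1 _ _); last by rewrite mulr_ge0.
    by apply: ler_sum => i _; rewrite /Q1 /= hj /=.
  by rewrite big1 // => i _; rewrite /Q1 /= [(j1 <= j2)%N]leqNgt hj /= andbF.
have -> : \sum_(j1 < N) \sum_(j2 < N) (if (j1 <= j2)%N then c * (dn j1 j2)%:R else 0)
   = c * (Snat N)%:R.
  rewrite /Snat natr_sum mulr_sumr; apply: eq_bigr => j1 _.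
  rewrite natr_sum mulr_sumr; apply: eq_bigr => j2 _.
  by case: ifP => _; rewrite ?mulr0.
rewrite sumr_const card_ord -mulr_natr mulrAC. rewrite mulr_natr.
by rewrite [X in _ <= X]mulr_natr.
Qed.

Definition swp {N : nat} (b : ('I_N * 'I_N) * ('I_N * 'I_N)) :
  ('I_N * 'I_N) * ('I_N * 'I_N) := ((b.1.2, b.1.1), (b.2.2, b.2.1)).

Lemma swp_inj N : injective (@swp N).
Proof. by apply: (can_inj (g := swp)); case=> [[? ?] [? ?]]. Qed.

Lemma count2 N c : 0 <= c ->
  \sum_(b : ('I_N * 'I_N) * ('I_N * 'I_N)) (if Q1 c (swp b) then 1 else 0)
    <= c * N%:R * (Snat N)%:R.
Proof.
move=> c0; have := @count1 N c c0.
by rewrite (reindex_inj (@swp_inj N)).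
Qed.

Lemma key (A B L t : R) : 0 < A -> 0 < B -> L = Num.sqrt (A ^+ 2 + B ^+ 2) ->
  A <= B -> A / L < t -> A < Num.sqrt 2 * t * B.
Proof.
move=> A0 B0 LE AB h.
have L0 : 0 < L by rewrite LE sqrtr_gt0 addr_gt0 // exprn_gt0.
rewrite ltr_pdivrMr // in h.
have hL : L <= Num.sqrt 2 * B.
  rewrite LE -{2}(ger0_norm (ltW B0)) -sqrtr_sqr -sqrtrM ?ler0n //.
  apply: ler_wsqrtr; nra.
have t0 : 0 < t by rewrite -(pmulr_lgt0 _ L0); exact: lt_trans A0 h.
apply: (lt_le_trans h); rewrite -mulrA mulrCA ler_pM2l //.
Qed.

Lemma nd_Q s (b1 b2 : 'I_(2 ^ s) * 'I_(2 ^ s)) : non_diagonal (R:=R) s b1 b2 ->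
  Q1 (Num.sqrt 2 * (side s : R) `^ (5%:R^-1)) (b1, b2) ||
  Q1 (Num.sqrt 2 * (side s : R) `^ (5%:R^-1)) (swp (b1, b2)).
Proof.
case: b1 b2 => [i1 j1] [i2 j2] [[h1 h2] [_ H]].
move: h1 h2; rewrite /Defs.center /= => h1 h2.
have u0 := side_gt0 s.
have hi : (i1 <= i2)%N by move: h1; rewrite ler_pM2r // lerD2r ler_nat.
have hj : (j1 <= j2)%N by move: h2; rewrite ler_pM2r // lerD2r ler_nat.
set A := dn i1 i2; set B := dn j1 j2.
set L := Num.sqrt ((A%:R : R) ^+ 2 + (B%:R : R) ^+ 2).
have A0 : 0 < (A%:R : R) by rewrite /A /dn ltr0Sn.
have B0 : 0 < (B%:R : R) by rewrite /B /dn ltr0Sn.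
have L0 : 0 < L by rewrite /L sqrtr_gt0 addr_gt0 // exprn_gt0.
have LL : L ^+ 2 = (A%:R : R) ^+ 2 + (B%:R : R) ^+ 2.
  by rewrite /L sqr_sqrtr // addr_ge0 // exprn_ge0 // ltW.
pose a := ((A%:R : R) / L, (B%:R : R) / L).
have ua : unit_pos_dir a.
  split; first exact: divr_gt0.
  split; first exact: divr_gt0.
  rewrite /a /= !expr_div_n -mulrDl -LL divff // expf_neq0 // gt_eqF //.
have hA : (A%:R : R) = i2.+1%:R - i1%:R.
  by rewrite /A /dn -natrB; [congr (_%:R); lia | lia].
have hB : (B%:R : R) = j2.+1%:R - j1%:R.
  by rewrite /B /dn -natrB; [congr (_%:R); lia | lia].
have tr : traverses (line ((i1%:R : R) * side s, (j1%:R : R) * side s) a)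
    (box s (i1, j1)) (box s (i2, j2)).
  split.
    exists ((i1%:R : R) * side s, (j1%:R : R) * side s); split.
      by exists 0; rewrite !mul0r !addr0.
    rewrite /box /=; split; apply/andP; split => //; rewrite ler_pM2r // ler_nat //.
  exists ((i2.+1%:R : R) * side s, (j2.+1%:R : R) * side s); split.
    exists (L * side s); rewrite /a /=.
    have Ln : L != 0 by rewrite gt_eqF.
    congr pair.
      rewrite hA; field; exact: Ln.
    rewrite hB; field; exact: Ln.
  rewrite /box /=; split; apply/andP; split => //; rewrite ler_pM2r // ler_nat //.
have := H _ _ ua tr; rewrite /lhat /a /=.
move=> hm.
have [hab|hab] := leP ((A%:R : R) / L) ((B%:R : R) / L).
  rewrite min_l // in hm.
  apply/orP; left; rewrite /Q1 /= hi hj /=.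
  rewrite ler_pM2r ?invr_gt0 // in hab.
  exact: (@key _ _ L _ A0 B0 erefl hab hm).
rewrite min_r ?(ltW hab) // in hm.
apply/orP; right; rewrite /Q1 /= hi hj /=.
rewrite ltr_pM2r ?invr_gt0 // in hab.
apply: (@key _ _ L _ B0 A0 _ (ltW hab) hm).
by rewrite /L addrC.
Qed.
End S.

Theorem lemma5 (R : realType) (s : nat) :
  (side s : R) <= (2 : R) `^ (- (5%:R / 2%:R)) ->
  (vol4 (B_nondiag (R := R) s) <= (Num.sqrt 2 * (side s : R) `^ (5%:R^-1))%:E)%E.
Proof.
move=> hs.
set t := (side s : R) `^ (5%:R^-1).
set c := Num.sqrt 2 * t.
have c0 : 0 <= c by rewrite mulr_ge0 ?sqrtr_ge0 ?powR_ge0.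
have sn0 : s <> 0%N.
  move=> s0; move: hs; rewrite s0 /side expr0 invr1.
  have h : (2 : R) `^ (- (5%:R / 2%:R)) <= 2 `^ (-1).
    apply: ler_powR; first by rewrite ler1n.
    rewrite lerN2 ler_pdivlMr //; lra.
  rewrite powR_inv1 // in h => h1.
  have := le_trans h1 h; lra.
have N2 : (2 <= 2 ^ s)%N.
  case: s sn0 {hs t c c0} => [//|s' _]; rewrite expnS; have := expn_gt0 2 s'; lia.
pose T2 := (('I_(2 ^ s) * 'I_(2 ^ s)) * ('I_(2 ^ s) * 'I_(2 ^ s)))%type.
pose P : pred T2 := fun b => `[< non_diagonal (R := R) s b.1 b.2 >].
pose D := [set b : T2 | non_diagonal (R := R) s b.1 b.2].
have -> : vol4 (B_nondiag (R := R) s) = ((lebx R) \x (lebx R))%E (B_nondiag s) by [].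
apply: le_trans.
  apply: (@content_sub_fsum _ _ _ ((lebx R) \x (lebx R))%E _ D _
    (fun b : T2 => box s b.1 `*` box s b.2) finite_finset).
  - by move=> b _; apply: measurableX; exact: box_meas.
  - apply: fin_bigcup_measurable; first exact: finite_finset.
    by move=> b _; apply: measurableX; exact: box_meas.
  - by [].
rewrite (eq_fsbigr (fun _ => ((side s : R) ^+ 4)%:E)); last first.
  by move=> b _; exact: vol_box.
rewrite fsumEFin; last exact: finite_finset.
rewrite lee_fin.
have -> : D = [set` enum P].
  apply/seteqP; split => b /=; rewrite mem_enum /P /= => h.
    exact/asboolP.
  exact/asboolP.
rewrite -fsbig_seq ?enum_uniq // big_enum /=.
set u4 := (side s : R) ^+ 4.
have u40 : 0 <= u4 by rewrite exprn_ge0 // ltW // side_gt0.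
apply: (@le_trans _ _ (\sum_(b : T2) u4 * ((if Q1 R c b then 1 else 0) + (if Q1 R c (swp b) then 1 else 0)))).
  rewrite big_mkcond /=; apply: ler_sum => -[b1 b2] _.
  case: ifP => hP; last by rewrite mulr_ge0 // addr_ge0 //; case: ifP.
  have := @nd_Q R s b1 b2 (asboolW hP); rewrite -/t -/c.
  case: (Q1 R c (b1, b2)); case: (Q1 R c (swp (b1, b2))) => //= _; rewrite ?mulr1 ?mulr0 ?addr0 ?add0r //.
  - by rewrite ler_peMr // lerDl.
  - by rewrite mulr1.
  - by rewrite mulr1.
rewrite -mulr_sumr big_split /=.
have h1 := @count1 R (2 ^ s) c c0.
have h2 := @count2 R (2 ^ s) c c0.
have hS := SnatE (2 ^ s).
set S := Snat (2 ^ s) in h1 h2 hS.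
set n := ((2 ^ s)%N%:R : R) in h1 h2.
have n2 : 2 <= n by rewrite /n ler_nat.
have hS' : 6 * (S%:R : R) = n * (n + 1) * (n + 2).
  by have := congr1 (GRing.natmul (1 : R)) hS; rewrite !natrM !natrD /n.
have un : u4 = (n ^+ 4)^-1.
  by rewrite /u4 /side /n natrX exprVn -exprM mulnC exprM.
apply: (@le_trans _ _ (u4 * (c * n * S%:R + c * n * S%:R))).
  apply: ler_wpM2l => //; exact: lerD h1 h2.
have n0 : 0 < n by apply: lt_le_trans n2; lra.
have h3 : 2 * (S%:R : R) <= n ^+ 3.
  have : 0 <= (2 * n + 1) * (n - 2) by apply: mulr_ge0; lra.
  move=> hh; nra.
rewrite un mulrC ler_pdivrMr ?exprn_gt0 //.
have -> : c * n * S%:R + c * n * S%:R = (c * n) * (2 * S%:R) by ring.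
have -> : c * n ^+ 4 = (c * n) * n ^+ 3 by rewrite exprS; ring.
by apply: ler_wpM2l => //; rewrite mulr_ge0 // ltW.
Qed.
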